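(* Assume the standing setup with $\lambda_1(\boldsymbol\Omega_K)>1$, and set $\mathbf v_1^{(r)}=\mathbf D_{\boldsymbol\rho^{\odot1/2}}(\mathbf 1_K-\mathbf g(1))$ and $\mathbf v_1^{(l)}=\boldsymbol\Omega_K\mathbf v_1^{(r)}$. Then $\mathbf v_1^{(r)}\succ\mathbf 0_K$, $(\mathbf D_{\mathbf g(1)}\boldsymbol\Omega_K)\mathbf v_1^{(r)}=\mathbf v_1^{(r)}$ and $(\mathbf D_{\mathbf g(1)}\boldsymbol\Omega_K)^\top\mathbf v_1^{(l)}=\mathbf v_1^{(l)}$.
   Context: Standing setup: $K\ge1$, $\boldsymbol\rho=(\rho_k)$ with $\rho_k\in(0,1)$, $\sum\rho_k=1$; $\mathbf S_K=(s_{kl})$ symmetric with $s_{kl}>0$; $\mathbf D_{\mathbf v}$ diagonal with diagonal $\mathbf v$; $\boldsymbol\Omega_K=\mathbf D_{\boldsymbol\rho^{\odot1/2}}\mathbf S_K\mathbf D_{\boldsymbol\rho^{\odot1/2}}$, $\boldsymbol\Gamma_K=\mathbf S_K\mathbf D_{\boldsymbol\rho}$; $\lambda_1$ = largest eigenvalue. For each $N$, $[N]$ is split into consecutive blocks $B_k$ with $|B_k|/N\to\rho_k$; $\Sigma_{ij}=s_{kl}$ for $i\in B_k,j\in B_l$; $\mathbf H$ symmetric with independent standard Gaussian entries on/above the diagonal; $\mathbf X=\mathbf H\odot\boldsymbol\Sigma^{\odot1/2}-N^{-1/2}\mathrm{Diag}(\boldsymbol\Sigma\mathbf 1)$; $\mu_X$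 the a.s. limiting spectral distribution of $\mathbf X/\sqrt N$. QVE: for $z\in\mathbb H_-=\{\Im z<0\}$, $\mathbf g(z)$ is the unique solution in $(\mathbb H_+)^K$ of $\mathbf 1_K=z\mathbf g-\mathbf g\odot\boldsymbol\Gamma_K(\mathbf g-\mathbf 1_K)$, $\sum_k\rho_kg_k$ being the Stieltjes transform of $\mu_X$; $\mathbf g(1)$ is the value at $1$ of its continuous extension to $\mathbb H_-\cup\mathbb R$. $\succ$ is entrywise strict inequality. *)

(* Defs.v *)
From mathcomp Require Import all_boot all_order all_algebra.
From mathcomp Require Import reals.
From mathcomp.real_closed Require Export complex.
Import GRing.Theory Num.Theory.

Set Implicit Arguments.
Unset Strict Implicit.
Unset Printing Implicit Defensive.

Local Open Scope ring_scope.
Local Open Scope complex_scope.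

Section Defs.
Variable R : realType.
Variable K : nat.

Definition Dv (T : nmodType) (v : 'cV[T]_K) : 'M[T]_K := diag_mx v^T.

Definition hadamard (T : pzSemiRingType) (m n : nat) (A B : 'M[T]_(m, n)) :
  'M[T]_(m, n) := map2_mx *%R A B.

Definition sqrtv (rho : 'cV[R]_K) : 'cV[R]_K := map_mx Num.sqrt rho.

Definition OmegaK (rho : 'cV[R]_K) (S : 'M[R]_K) : 'M[R]_K :=
  Dv (sqrtv rho) *m S *m Dv (sqrtv rho).

Definition GammaK (rho : 'cV[R]_K) (S : 'M[R]_K) : 'M[R]_K := S *m Dv rho.

Definition toC (m n : nat) (A : 'M[R]_(m, n)) : 'M[R[i]]_(m, n) :=
  map_mx (fun x => x%:C) A.

Definition largest_eigenvalue (A : 'M[R]_K) (lambda : R) : Prop :=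
  eigenvalue A lambda /\ (forall mu, eigenvalue A mu -> mu <= lambda).

Definition QVE (rho : 'cV[R]_K) (S : 'M[R]_K) (z : R[i]) (g : 'cV[R[i]]_K) : Prop :=
  const_mx 1 = z *: g - hadamard g (toC (GammaK rho S) *m (g - const_mx 1)).

Definition in_Hminus (z : R[i]) : Prop := complex.Im z < 0.
Definition in_Hplus (z : R[i]) : Prop := 0 < complex.Im z.

(* w is the limit of g(z) as z -> z0 with z in H_- (i.e. the value at z0 of
   the continuous extension of g to H_- \cup R) *)
Definition lim_from_Hminus (g : R[i] -> 'cV[R[i]]_K) (z0 : R[i]) (w : 'cV[R[i]]_K)
  : Prop :=
  forall k : 'I_K, forall eps : R, 0 < eps -> exists delta : R, 0 < delta /\
    forall z, in_Hminus z -> `|z - z0| < delta%:C -> `|g z k 0 - w k 0| < eps%:C.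

End Defs.

(* Main.v *)
Require Import Defs.
From mathcomp Require Import all_boot all_order all_algebra.
From mathcomp Require Import reals.
From mathcomp.real_closed Require Import complex.
From mathcomp Require Import ring lra.
Import Order.TTheory GRing.Theory Num.Theory.
Local Open Scope ring_scope.
Local Open Scope complex_scope.

Notation cRe := complex.Re.
Notation cIm := complex.Im.
Section Lim.
Context {R : realType}.
Implicit Types (a b w : R[i]).

Definition nc (w : R[i]) : R := Num.sqrt (cRe w ^+ 2 + cIm w ^+ 2).

Lemma ncE w : `|w| = (nc w)%:C.
Proof. by rewrite normc_def. Qed.

Lemma nc_ge0 w : 0 <= nc w.
Proof. exact: sqrtr_ge0. Qed.

Lemma ncD a b : nc (a + b) <= nc a + nc b.
Proof. by have := ler_normD a b; rewrite !ncE -rmorphD lecR. Qed.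

Lemma ncM a b : nc (a * b) = nc a * nc b.
Proof. by have := normrM a b; rewrite !ncE -rmorphM => -[]. Qed.

Lemma ncN a : nc (- a) = nc a.
Proof. by have := normrN a; rewrite !ncE => -[]. Qed.

Lemma ncB a b : nc (a - b) = nc (b - a).
Proof. by rewrite -ncN opprB. Qed.

Lemma ncJ a : nc (conjc a) = nc a.
Proof. by have := normcJ a; rewrite !ncE => -[]. Qed.

Lemma nc0 : nc 0 = 0.
Proof. by rewrite /nc /= expr0n /= addr0 sqrtr0. Qed.

Lemma nc_eq0 a : nc a = 0 -> a = 0.
Proof. by move=> h; apply/eqP; rewrite -normr_eq0 ncE h. Qed.

Lemma nc_Re a : `|cRe a| <= nc a.
Proof.
rewrite /nc -sqrtr_sqr; rewrite ler_sqrt ?addr_ge0 ?sqr_ge0 //.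
by rewrite lerDl sqr_ge0.
Qed.

Lemma nc_Im a : `|cIm a| <= nc a.
Proof.
rewrite /nc -sqrtr_sqr; rewrite ler_sqrt ?addr_ge0 ?sqr_ge0 //.
by rewrite lerDr sqr_ge0.
Qed.

Definition tends (F : R[i] -> R[i]) (L : R[i]) :=
  forall eps : R, 0 < eps -> exists delta : R, 0 < delta /\
    forall z, in_Hminus z -> nc (z - 1) < delta -> nc (F z - L) < eps.

Lemma min_pos {a b : R} : 0 < a -> 0 < b ->
  exists c, [/\ 0 < c, c <= a & c <= b].
Proof.
move=> ha hb; exists (Num.min a b); rewrite lt_min ha hb ge_min le_refl ge_min le_refl orbT.
by [].
Qed.

Lemma tends_cst c : tends (fun=> c) c.
Proof. by move=> e he; exists 1; split=> // z _ _; rewrite subrr nc0. Qed.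

Lemma tends_id : tends id 1.
Proof. by move=> e he; exists e. Qed.

Lemma tends_ext {F G L} : (forall z, F z = G z) -> tends F L -> tends G L.
Proof.
move=> FG h e he; have [d [hd hz]] := h e he; exists d; split=> // z h1 h2.
by rewrite -FG; apply: hz.
Qed.

Lemma tends_add {F G a b} : tends F a -> tends G b ->
  tends (fun z => F z + G z) (a + b).
Proof.
move=> hF hG e he.
have [d1 [hd1 h1]] := hF (e / 2) ltac:(by rewrite divr_gt0).
have [d2 [hd2 h2]] := hG (e / 2) ltac:(by rewrite divr_gt0).
have [d [hd hd1' hd2']] := min_pos hd1 hd2.
exists d; split=> // z hz hzd.
have := h1 z hz (lt_le_trans hzd hd1'); have := h2 z hz (lt_le_trans hzd hd2').
have -> : F z + G z - (a + b) = (F z - a) + (G z - b) by rewrite opprD addrACA.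
have := ncD (F z - a) (G z - b); lra.
Qed.

Lemma tends_opp {F a} : tends F a -> tends (fun z => - F z) (- a).
Proof.
move=> hF e he; have [d [hd h]] := hF e he; exists d; split=> // z hz hzd.
by rewrite -opprD ncN; apply: h.
Qed.

Lemma tends_conj {F a} : tends F a -> tends (fun z => (F z)^*) (conjc a).
Proof.
move=> hF e he; have [d [hd h]] := hF e he; exists d; split=> // z hz hzd.
by rewrite -rmorphB ncJ; apply: h.
Qed.

Lemma tends_mul {F G a b} : tends F a -> tends G b ->
  tends (fun z => F z * G z) (a * b).
Proof.
move=> hF hG e he.
set M := nc a + nc b + 1.
have hM : 0 < M by have := nc_ge0 a; have := nc_ge0 b; rewrite /M; lra.
have he2 : 0 < e / (2 * M) by rewrite divr_gt0 // mulr_gt0.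
have [e1 [he1 he11 he12]] := min_pos ltr01 he2.
have he1M : e1 * M <= e / 2.
  apply: (le_trans (ler_wpM2r (ltW hM) he12)); rewrite le_eqVlt; apply/orP; left; apply/eqP.
  by field; rewrite gt_eqF.
have [d1 [hd1 h1]] := hF e1 he1.
have [d2 [hd2 h2]] := hG e1 he1.
have [d [hd hd1' hd2']] := min_pos hd1 hd2.
exists d; split=> // z hz hzd.
have p1 := h1 z hz (lt_le_trans hzd hd1'); have p2 := h2 z hz (lt_le_trans hzd hd2').
have -> : F z * G z - a * b = (F z - a) * (G z - b) + (F z - a) * b + a * (G z - b).
  by ring.
have := ncD ((F z - a) * (G z - b) + (F z - a) * b) (a * (G z - b)).
have := ncD ((F z - a) * (G z - b)) ((F z - a) * b).
rewrite !ncM.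
have := nc_ge0 (F z - a); have := nc_ge0 (G z - b); have := nc_ge0 a; have := nc_ge0 b.
move: p1 p2 he1M he11; rewrite /M.
set p := nc (F z - a); set q := nc (G z - b); set na := nc a; set nb := nc b.
move=> *; nra.
Qed.

Lemma tends_sum (I : Type) (s : seq I) (F : I -> R[i] -> R[i]) (a : I -> R[i]) :
  (forall i, tends (F i) (a i)) ->
  tends (fun z => \sum_(i <- s) F i z) (\sum_(i <- s) a i).
Proof.
move=> h; elim: s => [|i s IH].
  by rewrite big_nil; apply: (tends_ext _ (tends_cst 0)) => z; rewrite big_nil.
rewrite big_cons; have := tends_add (h i) IH; apply: tends_ext => z /=.
by rewrite big_cons.
Qed.

Lemma witness {F L} : tends F L -> forall eps, 0 < eps ->
  exists z, in_Hminus z /\ nc (F z - L) < eps.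
Proof.
move=> h e he; have [d [hd hz]] := h e he.
exists (1 +i* (- (d / 2))).
have hin : in_Hminus (1 +i* (- (d / 2))).
  by rewrite /in_Hminus /= oppr_lt0 divr_gt0.
split=> //; apply: hz => //.
rewrite /nc /= subrr subr0 expr0n /= add0r sqrrN sqrtr_sqr.
rewrite ger0_norm ?divr_ge0 ?ltW //; lra.
Qed.

Lemma tends_Re_ge {F L} {c : R} : tends F L ->
  (forall z, in_Hminus z -> c <= cRe (F z)) -> c <= cRe L.
Proof.
move=> h hc; rewrite leNgt; apply/negP => hlt.
have hp : 0 < c - cRe L by rewrite subr_gt0.
have [z [hz hn]] := witness h _ hp.
have := nc_Re (F z - L); rewrite raddfB /=.
have := hc z hz; move: hn; set u := cRe (F z); set v := cRe L.
move=> *. have : u - v <= `|u - v| by apply: ler_norm. lra.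
Qed.

Lemma tends_Im_ge {F L} {c : R} : tends F L ->
  (forall z, in_Hminus z -> c <= cIm (F z)) -> c <= cIm L.
Proof.
move=> h hc; rewrite leNgt; apply/negP => hlt.
have hp : 0 < c - cIm L by rewrite subr_gt0.
have [z [hz hn]] := witness h _ hp.
have := nc_Im (F z - L); rewrite raddfB /=.
have := hc z hz; move: hn; set u := cIm (F z); set v := cIm L.
move=> *. have : u - v <= `|u - v| by apply: ler_norm. lra.
Qed.

Lemma tends_eq {F L c} : tends F L -> (forall z, in_Hminus z -> F z = c) -> L = c.
Proof.
move=> h hc; apply/eqP; rewrite -subr_eq0; apply/eqP; apply: nc_eq0.
have := nc_ge0 (L - c); rewrite le_eqVlt => /orP[/eqP <- //|hlt].
have [z [hz hn]] := witness h _ hlt.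
by move: hn; rewrite hc // ncB ltxx.
Qed.

End Lim.

Section Alg.
Context {R : realType}.
Context {K : nat}.
Implicit Types (r y d t f h : 'I_K -> R) (s : 'I_K -> 'I_K -> R).

Lemma amgm_term (a b ya yb : R) : 0 < ya -> 0 < yb ->
  a * b <= (a ^+ 2 * yb / ya + b ^+ 2 * ya / yb) / 2.
Proof.
move=> ha hb; rewrite -subr_ge0.
have -> : (a ^+ 2 * yb / ya + b ^+ 2 * ya / yb) / 2 - a * b =
  ya * yb * (a / ya - b / yb) ^+ 2 / 2.
  by field; rewrite ?gt_eqF.
by rewrite divr_ge0 // mulr_ge0 ?sqr_ge0 // mulr_ge0 // ltW.
Qed.

Lemma sym_bil r s f h : (forall k l, s k l = s l k) ->
  \sum_k r k * f k * (\sum_l s k l * r l * h l) =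
  \sum_k r k * h k * (\sum_l s k l * r l * f l).
Proof.
move=> hs.
transitivity (\sum_k \sum_l r k * r l * s k l * f k * h l).
  by apply: eq_bigr => k _; rewrite mulr_sumr; apply: eq_bigr => l _; ring.
rewrite exchange_big /=; apply: eq_bigr => k _; rewrite mulr_sumr.
by apply: eq_bigr => l _; rewrite hs; ring.
Qed.

Lemma quad_bound r s y d t :
  (forall k, 0 < y k) -> (forall k, 0 <= r k) -> (forall k l, 0 <= s k l) ->
  (forall k l, s k l = s l k) ->
  (forall k, \sum_l s k l * r l * y l <= d k * y k) ->
  \sum_k r k * t k * (\sum_l s k l * r l * t l) <= \sum_k r k * d k * t k ^+ 2.
Proof.
move=> hy hr hs hsym hd.
have e1 : \sum_k r k * t k * (\sum_l s k l * r l * t l) =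
    \sum_k \sum_l r k * r l * s k l * (t k * t l).
  by apply: eq_bigr => k _; rewrite mulr_sumr; apply: eq_bigr => l _; ring.
have i1 : \sum_k \sum_l r k * r l * s k l * (t k * t l) <=
    \sum_k \sum_l r k * r l * s k l *
      ((t k ^+ 2 * y l / y k + t l ^+ 2 * y k / y l) / 2).
  apply: ler_sum => k _; apply: ler_sum => l _; apply: ler_wpM2l.
    by rewrite !mulr_ge0.
  exact: amgm_term.
have e2 : \sum_k \sum_l r k * r l * s k l *
      ((t k ^+ 2 * y l / y k + t l ^+ 2 * y k / y l) / 2) = (\sum_k \sum_l r k * r l * s k l * (t k ^+ 2 * y l / y k)).
  have eX : \sum_k \sum_l r k * r l * s k l * (t l ^+ 2 * y k / y l) = (\sum_k \sum_l r k * r l * s k l * (t k ^+ 2 * y l / y k)).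
    rewrite exchange_big /=; apply: eq_bigr => k _; apply: eq_bigr => l _.
    by rewrite hsym; ring.
  transitivity ((\sum_k \sum_l r k * r l * s k l * (t k ^+ 2 * y l / y k) +
     \sum_k \sum_l r k * r l * s k l * (t l ^+ 2 * y k / y l)) / 2).
    rewrite -big_split /= mulr_suml; apply: eq_bigr => k _.
    rewrite -big_split /= mulr_suml; apply: eq_bigr => l _; ring.
  by rewrite eX; field.
have e3 : (\sum_k \sum_l r k * r l * s k l * (t k ^+ 2 * y l / y k)) = \sum_k r k * t k ^+ 2 / y k * (\sum_l s k l * r l * y l).
  by apply: eq_bigr => k _; rewrite mulr_sumr; apply: eq_bigr => l _; ring.
have i2 : \sum_k r k * t k ^+ 2 / y k * (\sum_l s k l * r l * y l) <=
    \sum_k r k * t k ^+ 2 / y k * (d k * y k).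
  apply: ler_sum => k _; apply: ler_wpM2l => //.
  by apply: divr_ge0; [apply: mulr_ge0 => //; exact: sqr_ge0 | exact: ltW].
have e4 : \sum_k r k * t k ^+ 2 / y k * (d k * y k) = \sum_k r k * d k * t k ^+ 2.
  by apply: eq_bigr => k _; field; rewrite gt_eqF.
rewrite e1; apply: (le_trans i1); rewrite e2 e3; apply: (le_trans i2).
by rewrite e4.
Qed.


Lemma step1 r s x w : (forall k, 0 < r k) -> (forall k l, s k l = s l k) ->
  (forall k, 0 <= w k) ->
  (forall k, x k * (1 + \sum_l s k l * r l * (1 - x l)) +
             w k * (\sum_l s k l * r l * w l) = 1) ->
  (forall k, w k * (1 + \sum_l s k l * r l * (1 - x l)) -
             x k * (\sum_l s k l * r l * w l) = 0) ->
  forall k, w k = 0.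
Proof.
move=> hr hs hw h1 h2.
pose P k := 1 + \sum_l s k l * r l * (1 - x l).
pose A k := \sum_l s k l * r l * w l.
pose T k := w k * P k - (1 - x k) * A k - w k.
have hsum : \sum_k r k * - T k = 0.
  have e := sym_bil r s w (fun k => 1 - x k) hs.
  have -> : \sum_k r k * - T k = \sum_k r k * (1 - x k) * (\sum_l s k l * r l * w l)
     - \sum_k r k * w k * (\sum_l s k l * r l * (1 - x l)).
    by rewrite -sumrB; apply: eq_bigr => k _; rewrite /T /P /A; ring.
  by rewrite e subrr.
have hK : forall k, 0 < x k ^+ 2 + w k ^+ 2 /\
   (x k ^+ 2 + w k ^+ 2) * - T k = w k * ((1 - x k) ^+ 2 + w k ^+ 2).
  move=> k.
  have e1 := h1 k; have e2 := h2 k; rewrite -/(P k) -/(A k) in e1 e2.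
  have hxw : 0 < x k ^+ 2 + w k ^+ 2.
    rewrite lt_neqAle addr_ge0 ?sqr_ge0 // andbT; apply/eqP => h0.
    have hx0 : x k = 0 by nra.
    have hw0 : w k = 0 by nra.
    by move: e1; rewrite hx0 hw0 !mul0r addr0 => /eqP; rewrite eq_sym oner_eq0.
  have key : (x k ^+ 2 + w k ^+ 2) * - T k = w k * ((1 - x k) ^+ 2 + w k ^+ 2).
    have eP : (x k ^+ 2 + w k ^+ 2) * P k = x k.
      transitivity (x k * (x k * P k + w k * A k) + w k * (w k * P k - x k * A k)).
        by ring.
      by rewrite e1 e2; ring.
    have eA : (x k ^+ 2 + w k ^+ 2) * A k = w k.
      transitivity (w k * (x k * P k + w k * A k) - x k * (w k * P k - x k * A k)).
        by ring.
      by rewrite e1 e2; ring.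
    transitivity (- (w k * ((x k ^+ 2 + w k ^+ 2) * P k) - (1 - x k) * ((x k ^+ 2 + w k ^+ 2) * A k)
        - w k * (x k ^+ 2 + w k ^+ 2))).
      by rewrite /T; ring.
    by rewrite eP eA; ring.
  by [].
have hT : forall k, 0 <= r k * - T k.
  move=> k; apply: mulr_ge0; first exact: ltW.
  have [hxw key] := hK k.
  rewrite -(pmulr_rge0 _ hxw) key.
  by rewrite mulr_ge0 // addr_ge0 ?sqr_ge0.
move=> k; have := @psumr_eq0P _ _ (fun _ => true) (fun i => r i * - T i) (fun i _ => hT i) hsum k isT.
move/eqP; rewrite mulf_eq0 gt_eqF //= => /eqP hTk.
have [hxw key] := hK k; move: key; rewrite hTk mulr0 => /esym/eqP.
rewrite mulf_eq0 => /orP[/eqP //|].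
have := hw k; rewrite le_eqVlt => /orP[/eqP <- //|hwk].
by rewrite gt_eqF // ltr_pwDr ?exprn_gt0 ?sqr_ge0.
Qed.


Lemma step2 r s x : (forall k, 0 < r k) -> (forall k l, 0 < s k l) ->
  (forall k, x k * (1 + \sum_l s k l * r l * (1 - x l)) = 1) ->
  (forall t, \sum_k r k * t k * (\sum_l s k l * r l * t l) <=
     \sum_k r k * (1 + \sum_l s k l * r l * (1 - x l)) ^+ 2 * t k ^+ 2) ->
  (exists t, \sum_k r k * t k ^+ 2 < \sum_k r k * t k * (\sum_l s k l * r l * t l)) ->
  forall k, x k < 1.
Proof.
move=> hr hs hx hq [t0 ht0].
pose P k := 1 + \sum_l s k l * r l * (1 - x l).
pose u k := 1 - x k.
have hu : forall k, \sum_l s k l * r l * u l = u k * P k.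
  move=> k; have := hx k; rewrite -/(P k) /u /P => e.
  by rewrite mulrBl mul1r e; ring.
have hnn : forall k, 0 <= u k.
  pose t k := Num.min (u k) 0.
  have htu : forall k, t k * u k = t k ^+ 2.
    move=> k; rewrite /t; case: (leP (u k) 0) => _; [by rewrite expr2|by rewrite mul0r expr0n].
  have htn : forall k, t k <= 0 by move=> k; rewrite /t ge_min lexx orbT.
  have htu2 : forall k, t k <= u k by move=> k; rewrite /t ge_min lexx.
  have i1 : \sum_k r k * t k ^+ 2 * P k <= \sum_k r k * t k * (\sum_l s k l * r l * t l).
    apply: ler_sum => k _.
    have -> : r k * t k ^+ 2 * P k = r k * t k * (\sum_l s k l * r l * u l).
      by rewrite hu -htu; ring.
    have -> : \sum_l s k l * r l * u l =
       \sum_l s k l * r l * t l + \sum_l s k l * r l * (u l - t l).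
      by rewrite -big_split; apply: eq_bigr => l _ /=; ring.
    rewrite mulrDr gerDl; apply: mulr_le0_ge0.
      by apply: mulr_ge0_le0; [exact: ltW|exact: htn].
    apply: sumr_ge0 => l _; apply: mulr_ge0; first by apply: mulr_ge0; exact: ltW.
    by rewrite subr_ge0.
  have i2 := hq t; rewrite -/P in i2.
  have hterm : forall k, 0 <= r k * t k ^+ 2 * (P k - P k ^+ 2).
    move=> k; rewrite /t; case: (leP (u k) 0) => hk; last by rewrite expr0n /= mulr0 mul0r.
    apply: mulr_ge0; first by apply: mulr_ge0; [exact: ltW|exact: sqr_ge0].
    have := hx k; rewrite -/(P k) => e.
    move: hk; rewrite /u => hk.
    have hP : 0 < P k by nra.
    nra.
  have hs0 : \sum_k r k * t k ^+ 2 * (P k - P k ^+ 2) = 0.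
    apply/eqP; rewrite eq_le; apply/andP; split; last by apply: sumr_ge0 => k _.
    have -> : \sum_k r k * t k ^+ 2 * (P k - P k ^+ 2) =
      \sum_k r k * t k ^+ 2 * P k - \sum_k r k * P k ^+ 2 * t k ^+ 2.
      by rewrite -sumrB; apply: eq_bigr => k _; ring.
    rewrite subr_le0; exact: (le_trans i1 i2).
  move=> k; rewrite leNgt; apply/negP => hk.
  have := @psumr_eq0P _ _ (fun _ => true) (fun i => r i * t i ^+ 2 * (P i - P i ^+ 2))
     (fun i _ => hterm i) hs0 k isT.
  have htk : t k = u k by rewrite /t; apply/min_idPl; exact: ltW.
  rewrite htk; have := hx k; rewrite -/(P k) => e.
  move: hk; rewrite /u => hk.
  have hP : 0 < P k by nra.
  have hP1 : P k < 1 by nra.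
  have hrk := hr k.
  have hPP : 0 < P k - P k ^+ 2 by rewrite expr2; nra.
  have hu2 : 0 < (1 - x k) ^+ 2 by rewrite expr2; nra.
  move=> /eqP; rewrite !mulf_eq0 (gt_eqF hPP) (gt_eqF hrk) /= orbF orbb subr_eq0 => /eqP; lra.
have hpos : forall k, 0 < u k.
  move=> k; rewrite lt_neqAle hnn andbT; apply/eqP => hk0.
  have hz : \sum_l s k l * r l * u l = 0 by rewrite hu -hk0 mul0r.
  have hall : forall l, u l = 0.
    move=> l; have := @psumr_eq0P _ _ (fun _ => true) (fun i => s k i * r i * u i)
      (fun i _ => mulr_ge0 (mulr_ge0 (ltW (hs k i)) (ltW (hr i))) (hnn i)) hz l isT.
    by move/eqP; rewrite !mulf_eq0 (gt_eqF (hs k l)) (gt_eqF (hr l)) /= => /eqP.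
  have hP1 : forall l, P l = 1.
    move=> l; have := hx l; rewrite -/(P l).
    have -> : x l = 1 by have := hall l; rewrite /u; lra.
    by rewrite mul1r.
  have := hq t0.
  have -> : \sum_k r k * (1 + \sum_l s k l * r l * (1 - x l)) ^+ 2 * t0 k ^+ 2 =
     \sum_k r k * t0 k ^+ 2.
    by apply: eq_bigr => j _; rewrite -/(P j) hP1 expr1n mulr1.
  by move=> h; move: (lt_le_trans ht0 h); rewrite ltxx.
by move=> k; have := hpos k; rewrite /u; lra.
Qed.

End Alg.

Section Main.
Context {R : realType}.
Context {K : nat}.

Lemma cReM (a b : R[i]) : cRe (a * b) = cRe a * cRe b - cIm a * cIm b.
Proof. by case: a => a1 a2; case: b => b1 b2. Qed.

Lemma cImM (a b : R[i]) : cIm (a * b) = cRe a * cIm b + cIm a * cRe b.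
Proof. by case: a => a1 a2; case: b => b1 b2. Qed.

Lemma cReD (a b : R[i]) : cRe (a + b) = cRe a + cRe b.
Proof. by case: a => a1 a2; case: b => b1 b2. Qed.

Lemma cImD (a b : R[i]) : cIm (a + b) = cIm a + cIm b.
Proof. by case: a => a1 a2; case: b => b1 b2. Qed.

Lemma cReB (a b : R[i]) : cRe (a - b) = cRe a - cRe b.
Proof. by case: a => a1 a2; case: b => b1 b2. Qed.

Lemma cImB (a b : R[i]) : cIm (a - b) = cIm a - cIm b.
Proof. by case: a => a1 a2; case: b => b1 b2. Qed.

Lemma cRe_sum (I : Type) (s : seq I) (F : I -> R[i]) :
  cRe (\sum_(i <- s) F i) = \sum_(i <- s) cRe (F i).
Proof.
elim: s => [|i s IH]; first by rewrite !big_nil.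
by rewrite !big_cons cReD IH.
Qed.

Lemma cIm_sum (I : Type) (s : seq I) (F : I -> R[i]) :
  cIm (\sum_(i <- s) F i) = \sum_(i <- s) cIm (F i).
Proof.
elim: s => [|i s IH]; first by rewrite !big_nil.
by rewrite !big_cons cImD IH.
Qed.

Lemma cReRM (r : R) (a : R[i]) : cRe (r%:C * a) = r * cRe a.
Proof. by rewrite cReM /= mul0r subr0. Qed.

Lemma cImRM (r : R) (a : R[i]) : cIm (r%:C * a) = r * cIm a.
Proof. by rewrite cImM /= mul0r addr0. Qed.

Lemma cReJ (a : R[i]) : cRe (conjc a) = cRe a.
Proof. by case: a. Qed.

Lemma cImJ (a : R[i]) : cIm (conjc a) = - cIm a.
Proof. by case: a. Qed.

Lemma qve_k {rho : 'cV[R]_K} {S : 'M[R]_K} {z} {gv : 'cV[R[i]]_K} :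
  QVE rho S z gv -> forall k,
  gv k 0 * (z + \sum_l (S k l * rho l 0)%:C * (1 - gv l 0)) = 1.
Proof.
rewrite /QVE => h k; move/matrixP/(_ k 0): h; rewrite /hadamard !mxE => e.
rewrite [RHS]e.
have -> : \sum_l (S k l * rho l 0)%:C * (1 - gv l 0) =
   - \sum_j toC (GammaK rho S) k j * (gv - const_mx 1) j 0.
  rewrite -sumrN; apply: eq_bigr => l _.
  rewrite /GammaK /Dv mul_mx_diag !mxE; ring.
ring.
Qed.


Lemma OmE (rho : 'cV[R]_K) (S : 'M[R]_K) k l :
  OmegaK rho S k l = Num.sqrt (rho k 0) * S k l * Num.sqrt (rho l 0).
Proof. by rewrite /OmegaK /Dv mul_mx_diag mxE mul_diag_mx !mxE. Qed.

Lemma real_of (a : R[i]) : cIm a = 0 -> a = (cRe a)%:C.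
Proof. by case: a => a b /= ->. Qed.

Lemma eig_t (rho : 'cV[R]_K) (S : 'M[R]_K) l1 :
  (forall k, 0 < rho k 0) -> (forall k l, S k l = S l k) ->
  eigenvalue (OmegaK rho S) l1 -> 1 < l1 ->
  exists t : 'I_K -> R, \sum_k rho k 0 * t k ^+ 2 <
     \sum_k rho k 0 * t k * (\sum_l S k l * rho l 0 * t l).
Proof.
move=> hr hs /eigenvalueP [e he enz] hl1.
pose q k := Num.sqrt (rho k 0).
have hq : forall k, 0 < q k by move=> k; rewrite sqrtr_gt0.
have hq2 : forall k, q k ^+ 2 = rho k 0 by move=> k; rewrite sqr_sqrtr // ltW.
exists (fun k => e 0 k / q k).
have e1 : \sum_k rho k 0 * (e 0 k / q k) ^+ 2 = \sum_k e 0 k ^+ 2.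
  apply: eq_bigr => k _; rewrite -hq2; field; exact: lt0r_neq0.
have e2 : \sum_k rho k 0 * (e 0 k / q k) * (\sum_l S k l * rho l 0 * (e 0 l / q l))
    = \sum_k e 0 k * (e *m OmegaK rho S) 0 k.
  apply: eq_bigr => k _; rewrite mxE mulr_sumr mulr_sumr; apply: eq_bigr => l _.
  rewrite OmE -/(q k) -/(q l) -!hq2 (hs k l); field; apply/andP; split; exact: lt0r_neq0.
have e3 : \sum_k e 0 k * (e *m OmegaK rho S) 0 k = l1 * \sum_k e 0 k ^+ 2.
  rewrite he mulr_sumr; apply: eq_bigr => k _; rewrite mxE; ring.
have hpos : 0 < \sum_k e 0 k ^+ 2.
  rewrite lt_neqAle sumr_ge0 ?andbT; last by move=> k _; exact: sqr_ge0.
  apply/negP => /eqP h0; move/negP: enz; apply; apply/eqP/matrixP => i j.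
  rewrite (ord1 i) mxE.
  have := @psumr_eq0P _ _ (fun _ => true) (fun k => e 0 k ^+ 2)
    (fun k _ => sqr_ge0 (e 0 k)) (esym h0) j isT.
  by move/eqP; rewrite sqrf_eq0 => /eqP.
by rewrite e1 e2 e3 ltr_pMl.
Qed.

End Main.

Theorem mainTheorem11 (R : realType) (K : nat) (rho : 'cV[R]_K) (S : 'M[R]_K)
    (g : R[i] -> 'cV[R[i]]_K) (g1 : 'cV[R[i]]_K) :
  (0 < K)%N ->
  (forall k, 0 < rho k 0 < 1) ->
  \sum_k rho k 0 = 1 ->
  S^T = S ->
  (forall k l, 0 < S k l) ->
  (* g is the solution of the QVE in (H_+)^K for z in H_- *)
  (forall z, in_Hminus z -> (forall k, in_Hplus (g z k 0)) /\ QVE rho S z (g z)) ->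
  (* g1 = g(1), the value at 1 of the continuous extension of g *)
  lim_from_Hminus g 1 g1 ->
  (* lambda_1(Omega_K) > 1 *)
  (exists lambda1, largest_eigenvalue (OmegaK rho S) lambda1 /\ 1 < lambda1) ->
  let vr := Dv (toC (sqrtv rho)) *m (const_mx 1 - g1) in
  let vl := toC (OmegaK rho S) *m vr in
  let M := Dv g1 *m toC (OmegaK rho S) in
  (forall k, 0 < vr k 0) /\ M *m vr = vr /\ M^T *m vl = vl.
Proof.
move=> K0 hrho hsum hST hSpos hg hlim [l1 [[heig _] hl1]] vr vl M.
have hr : forall k, 0 < rho k 0 by move=> k; case/andP: (hrho k).
have hsym : forall k l, S k l = S l k by move=> k l; rewrite -{1}hST mxE.
pose hz k z := z + \sum_l (S k l * rho l 0)%:C * (1 - g z l 0).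
pose h1 k := 1 + \sum_l (S k l * rho l 0)%:C * (1 - g1 l 0).
have tg : forall l, tends (fun z => g z l 0) (g1 l 0).
  move=> l e he; have [d [hd H]] := hlim l e he; exists d; split=> // z hz1 hzd.
  by have := H z hz1; rewrite !ncE !ltcR; apply.
have th : forall k, tends (hz k) (h1 k).
  move=> k; apply: (tends_ext _ (tends_add tends_id (tends_sum _ _ _ _ (fun l =>
    tends_mul (tends_cst (S k l * rho l 0)%:C) (tends_add (tends_cst 1) (tends_opp (tg l))))))).
  by [].
have him : forall k, 0 <= cIm (g1 k 0).
  move=> k; apply: (tends_Im_ge (tg k)) => z hz1; exact: ltW ((hg z hz1).1 k).
have hgh : forall k, g1 k 0 * h1 k = 1.
  move=> k; apply: (tends_eq (tends_mul (tg k) (th k))) => z hz1.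
  exact: (qve_k (hg z hz1).2 k).
have hImh : forall k z, cIm (hz k z) = cIm z - \sum_l S k l * rho l 0 * cIm (g z l 0).
  move=> k z; rewrite /hz cImD cIm_sum -sumrN; congr (_ + _); apply: eq_bigr => l _.
  rewrite cImRM cImB /=; ring.
have hReh : forall k z, cRe (hz k z) = cRe z + \sum_l S k l * rho l 0 * (1 - cRe (g z l 0)).
  move=> k z; rewrite /hz cReD cRe_sum; congr (_ + _); apply: eq_bigr => l _.
  by rewrite cReRM cReB.
have hd : forall a : R[i], cRe (a * conjc a) = cRe a ^+ 2 + cIm a ^+ 2.
  by move=> a; rewrite cReM cReJ cImJ; ring.
have hstar : forall t : 'I_K -> R,
  \sum_k rho k 0 * t k * (\sum_l S k l * rho l 0 * t l) <=
  \sum_k rho k 0 * cRe (h1 k * conjc (h1 k)) * t k ^+ 2.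
  move=> t.
  pose Phi z := \sum_k (rho k 0 * t k ^+ 2)%:C * (hz k z * conjc (hz k z)).
  have tP : tends Phi (\sum_k (rho k 0 * t k ^+ 2)%:C * (h1 k * conjc (h1 k))).
    apply: (tends_ext _ (tends_sum _ _ _ _ (fun k =>
      tends_mul (tends_cst _) (tends_mul (th k) (tends_conj (th k)))))).
    by [].
  have := tends_Re_ge tP (c := \sum_k rho k 0 * t k * (\sum_l S k l * rho l 0 * t l)).
  rewrite cRe_sum.
  have -> : \sum_k cRe ((rho k 0 * t k ^+ 2)%:C * (h1 k * conjc (h1 k))) =
     \sum_k rho k 0 * cRe (h1 k * conjc (h1 k)) * t k ^+ 2.
    by apply: eq_bigr => k _; rewrite cReRM; ring.
  apply => z hz1.
  have [hgp hq] := hg z hz1.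
  rewrite /Phi cRe_sum.
  have -> : \sum_k cRe ((rho k 0 * t k ^+ 2)%:C * (hz k z * conjc (hz k z))) =
     \sum_k rho k 0 * cRe (hz k z * conjc (hz k z)) * t k ^+ 2.
    by apply: eq_bigr => k _; rewrite cReRM; ring.
  apply: (quad_bound (fun k => rho k 0) (fun k l => S k l)
     (fun l => cIm (g z l 0))).
  - by move=> k; exact: hgp.
  - by move=> k; exact: ltW.
  - by move=> k l; exact: ltW.
  - exact: hsym.
  move=> k; have e := qve_k hq k; rewrite -/(hz k z) in e.
  have eR := congr1 (@complex.Re R) e; have eI := congr1 (@complex.Im R) e.
  rewrite cReM /= in eR; rewrite cImM /= in eI.
  have hI := hImh k z; rewrite hd.
  have hzI : cIm z < 0 := hz1.
  have hb : 0 < cIm (g z k 0) := hgp k.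
  move: eR eI hI hzI hb.
  set a := cRe (g z k 0); set b := cIm (g z k 0); set c := cRe (hz k z);
  set e' := cIm (hz k z); set Sy := \sum_l _.
  move=> eR eI hI hzI hb; clearbody a b c e' Sy.
  have key : b * (c ^+ 2 + e' ^+ 2) = - e'.
    transitivity (c * (a * e' + b * c) + e' * (b * e' - a * c + 1) - e').
      by ring.
    rewrite eI.
    have -> : b * e' - a * c + 1 = 0 by rewrite -eR; ring.
    ring.
  have -> : Sy = cIm z - e' by rewrite hI; ring.
  rewrite mulrC key; lra.
pose x k := cRe (g1 k 0); pose w k := cIm (g1 k 0).
have hRe1 : forall k, cRe (h1 k) = 1 + \sum_l S k l * rho l 0 * (1 - x l).
  move=> k; rewrite /h1 cReD cRe_sum; congr (_ + _); apply: eq_bigr => l _.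
  by rewrite cReRM cReB.
have hIm1 : forall k, cIm (h1 k) = - \sum_l S k l * rho l 0 * w l.
  move=> k; rewrite /h1 cImD cIm_sum /= add0r -sumrN; apply: eq_bigr => l _.
  rewrite cImRM cImB /=; rewrite /w; ring.
have hw0 : forall k, w k = 0.
  apply: (step1 (fun k => rho k 0) (fun k l => S k l) x w hr hsym him).
    move=> k; have := congr1 (@complex.Re R) (hgh k).
    by rewrite cReM hRe1 hIm1 /= => e; rewrite -[X in _ = X]e /x /w; ring.
  move=> k; have := congr1 (@complex.Im R) (hgh k).
  by rewrite cImM hRe1 hIm1 /= => e; rewrite -[X in _ = X]e /x /w; ring.
have hA0 : forall k, \sum_l S k l * rho l 0 * w l = 0.
  by move=> k; rewrite big1 // => l _; rewrite hw0 mulr0.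
have hx1 : forall k, x k * (1 + \sum_l S k l * rho l 0 * (1 - x l)) = 1.
  move=> k; have := congr1 (@complex.Re R) (hgh k).
  by rewrite cReM hRe1 hIm1 hA0 /= => e; rewrite -[X in _ = X]e /x; ring.
have hxlt : forall k, x k < 1.
  apply: (step2 (fun k => rho k 0) (fun k l => S k l) x hr hSpos hx1).
    move=> t; apply: (le_trans (hstar t)); rewrite le_eqVlt; apply/orP; left.
    apply/eqP; apply: eq_bigr => k _; rewrite hd hRe1 hIm1 hA0 oppr0.
    by rewrite expr0n /= addr0.
  exact: (eig_t _ _ _ hr hsym heig hl1).
have hg1 : forall k, g1 k 0 = (x k)%:C by move=> k; apply: real_of; exact: hw0.
have hvr : forall k, vr k 0 = (Num.sqrt (rho k 0) * (1 - x k))%:C.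
  move=> k; rewrite /vr /Dv mul_diag_mx !mxE hg1.
  by rewrite rmorphM rmorphB rmorph1.
have hM : forall k l, M k l = (x k * OmegaK rho S k l)%:C.
  move=> k l; rewrite /M /Dv mul_diag_mx !mxE hg1.
  by rewrite rmorphM.
have hMv : M *m vr = vr.
  apply/matrixP => k j; rewrite (ord1 j) mxE hvr.
  under eq_bigr => l _ do rewrite hM hvr -rmorphM.
  rewrite -rmorph_sum; congr (_%:C).
  transitivity (x k * Num.sqrt (rho k 0) * \sum_l S k l * rho l 0 * (1 - x l)).
    rewrite mulr_sumr; apply: eq_bigr => l _; rewrite OmE.
    have e := sqr_sqrtr (ltW (hr l)); rewrite expr2 in e.
    rewrite -[in RHS]e; ring.
  have h := hx1 k.
  transitivity (Num.sqrt (rho k 0) * (x k * (1 + \sum_l S k l * rho l 0 * (1 - x l)) - x k)).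
    by ring.
  by rewrite h.
have hOT : (toC (OmegaK rho S))^T = toC (OmegaK rho S).
  rewrite /toC map_trmx; congr map_mx.
  by rewrite /OmegaK !trmx_mul /Dv !tr_diag_mx hST mulmxA.
split; last split.
- move=> k; rewrite hvr ltcR; apply: mulr_gt0; first by rewrite sqrtr_gt0.
  by rewrite subr_gt0.
- exact: hMv.
rewrite /vl {1}/M trmx_mul hOT /Dv tr_diag_mx.
by rewrite -mulmxA (mulmxA (diag_mx g1^T)) -/(Dv g1) -/M hMv.
Qed.
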